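(* For every level $t \in \mathcal{L}$ there exist finitely many levels $u_1, \ldots, u_n$, each generated by the grammar $u ::= x \mid 0 \mid s(u) \mid \operatorname{imax}(u, u)$ (with $x \in \mathcal{X}$, i.e. containing no $\max$), such that $t =_{\mathcal{L}} \max(u_1, \ldots, u_n)$.
   Context: $\operatorname{imax}\colon \mathbb{N}\times\mathbb{N}\to\mathbb{N}$ is defined by $\operatorname{imax}(i,0)=0$ and $\operatorname{imax}(i,j+1)=\max(i,j+1)$. Levels are the terms of the grammar $t ::= x \mid 0 \mid s(t) \mid \max(t,t) \mid \operatorname{imax}(t,t)$, where $x$ ranges over a countable set of variables $\mathcal{X}$; $\mathcal{L}$ denotes the set of levels. A valuation is a function $\sigma\colon\mathcal{X}\to\mathbb{N}$; the value $[t]_\sigma$ is defined by $[0]_\sigma=0$, $[x]_\sigma=\sigma(x)$, $[s(t)]_\sigma=[t]_\sigma+1$, $[\max(t_1,t_2)]_\sigma=\max([t_1]_\sigma,[t_2]_\sigma)$, $[\operatorname{imax}(t_1,t_2)]_\sigma=\operatorname{imax}([t_1]_\sigma,[t_2]_\sigma)$. $t_1 =_{\mathcal{L}} t_2$ means $[t_1]_\sigma=[t_2]_\sigma$ for every valuation $\sigma$. $\max(u_1,\ldots,u_n)$ denotes the $n$-ary maximum (its value is the maximum of the values). *)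

(* Defs.v *)
From Stdlib Require Import Arith List.
Import ListNotations.

Definition imax (i j : nat) : nat :=
  match j with 0 => 0 | S _ => Nat.max i j end.

Inductive level : Type :=
| LVar  : nat -> level
| LZero : level
| LSucc : level -> level
| LMax  : level -> level -> level
| LIMax : level -> level -> level.

Fixpoint eval (sigma : nat -> nat) (t : level) : nat :=
  match t with
  | LVar x => sigma x
  | LZero => 0
  | LSucc t => S (eval sigma t)
  | LMax a b => Nat.max (eval sigma a) (eval sigma b)
  | LIMax a b => imax (eval sigma a) (eval sigma b)
  end.

Definition level_eq (t1 t2 : level) : Prop :=
  forall sigma : nat -> nat, eval sigma t1 = eval sigma t2.

Fixpoint max_free (u : level) : Prop :=
  match u with
  | LVar _ | LZero => True
  | LSucc u => max_free u
  | LMax _ _ => False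
  | LIMax a b => max_free a /\ max_free b
  end.

Definition eval_nmax (sigma : nat -> nat) (us : list level) : nat :=
  fold_right (fun u m => Nat.max (eval sigma u) m) 0 us.

(* Main.v *)
Require Import Defs.
From Stdlib Require Import List Lia.
Import ListNotations.

Lemma imax_maxl a b c : imax (Nat.max a b) c = Nat.max (imax a c) (imax b c).
Proof. destruct c; simpl; lia. Qed.

Lemma imax_maxr a b c : imax a (Nat.max b c) = Nat.max (imax a b) (imax a c).
Proof. destruct b, c; simpl; lia. Qed.

Lemma nmax_app s us vs : eval_nmax s (us ++ vs) = Nat.max (eval_nmax s us) (eval_nmax s vs).
Proof. induction us; simpl; [reflexivity|]. unfold eval_nmax in *; simpl in *. rewrite IHus; lia. Qed.

Lemma nmax_succ s us : us <> nil -> eval_nmax s (map LSucc us) = S (eval_nmax s us).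
Proof.
  induction us as [|a us IH]; intros H; [congruence|].
  destruct us as [|b us]; [unfold eval_nmax; simpl; lia|].
  unfold eval_nmax in *; simpl in *. rewrite IH by discriminate. lia.
Qed.

Lemma nmax_imaxr s u vs : vs <> nil ->
  eval_nmax s (map (LIMax u) vs) = imax (eval s u) (eval_nmax s vs).
Proof.
  induction vs as [|a vs IH]; intros H; [congruence|].
  destruct vs as [|b vs]; [unfold eval_nmax; simpl; destruct (eval s a); simpl; lia|].
  change (eval_nmax s (map (LIMax u) (a :: b :: vs))) with
    (Nat.max (imax (eval s u) (eval s a)) (eval_nmax s (map (LIMax u) (b :: vs)))).
  rewrite IH by discriminate.
  change (eval_nmax s (a :: b :: vs)) with (Nat.max (eval s a) (eval_nmax s (b::vs))).
  rewrite imax_maxr. reflexivity.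
Qed.

Lemma nmax_imax s us vs : us <> nil -> vs <> nil ->
  eval_nmax s (flat_map (fun u => map (LIMax u) vs) us) = imax (eval_nmax s us) (eval_nmax s vs).
Proof.
  intros Hu Hv.
  induction us as [|a us IH]; [congruence|].
  simpl flat_map. rewrite nmax_app, nmax_imaxr by exact Hv.
  destruct us as [|b us].
  - change (eval_nmax s [a]) with (Nat.max (eval s a) 0).
    change (eval_nmax s (flat_map (fun u : level => map (LIMax u) vs) [])) with 0.
    destruct (eval_nmax s vs); simpl; lia.
  - rewrite IH by discriminate.
    change (eval_nmax s (a :: b :: us)) with (Nat.max (eval s a) (eval_nmax s (b::us))).
    rewrite imax_maxl. reflexivity.
Qed.

Theorem theorem13 : forall t : level,
  exists us : list level,
    us <> nil /\
    Forall max_free us /\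
    forall sigma : nat -> nat, eval sigma t = eval_nmax sigma us.
Proof.
  induction t as [x| |t IH|a IHa b IHb|a IHa b IHb].
  - exists [LVar x]. split; [discriminate|]. split; [repeat constructor|].
    intros s; unfold eval_nmax; simpl; lia.
  - exists [LZero]. split; [discriminate|]. split; [repeat constructor|].
    intros s; unfold eval_nmax; simpl; lia.
  - destruct IH as [us [Hn [Hf He]]]. exists (map LSucc us).
    split; [destruct us; simpl; congruence|]. split.
    + apply Forall_map. eapply Forall_impl; [|exact Hf]. simpl; auto.
    + intros s. rewrite nmax_succ by exact Hn. simpl. rewrite He. reflexivity.
  - destruct IHa as [us [Hn [Hf He]]]. destruct IHb as [vs [Hn' [Hf' He']]].
    exists (us ++ vs). split; [destruct us; simpl; congruence|]. split.
    + apply Forall_app; auto.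
    + intros s. rewrite nmax_app. simpl. rewrite He, He'. reflexivity.
  - destruct IHa as [us [Hn [Hf He]]]. destruct IHb as [vs [Hn' [Hf' He']]].
    exists (flat_map (fun u => map (LIMax u) vs) us). split.
    + destruct us as [|u us]; [congruence|]. destruct vs; [congruence|]. simpl. discriminate.
    + split.
      * apply Forall_flat_map. eapply Forall_impl; [|exact Hf]. intros u Hu.
        apply Forall_map. eapply Forall_impl; [|exact Hf']. simpl; auto.
      * intros s. rewrite nmax_imax by assumption. simpl. rewrite He, He'. reflexivity.
Qed.
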